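(* Let $A$ be a nontrivial closed class of decision tables from $\mathcal M_2^\infty$ and $\psi$ a bounded complexity measure. If the function $Z_{\psi,A}$ is not everywhere defined, then the function $\mathcal H^\infty_{\psi,A}$ is not everywhere defined.
   Context: Notation: $\omega=\{0,1,2,\dots\}$; $\mathcal P(\omega)$ is the set of nonempty finite subsets of $\omega$; $E_2=\{0,1\}$. $P=\{f_i:i\in\omega\}$ is a set of attributes, $f_i\neq f_j$ for $i\ne j$. Decision tables: $\mathcal M_2^\infty$ is the set of rectangular tables filled with numbers from $E_2$, whose columns are labeled with pairwise different attributes from $P$, whose rows are pairwise different, and each row of which is labeled with a set from $\mathcal P(\omega)$ (its set of decisions). The empty table (no rows) is denoted $\Lambda$ and belongs to $\mathcal M_2^\infty$. For $T\in\mathcal M_2^\infty$: $\Pi(T)$ is the intersection of the decision sets of all rows (common decisions); $\mathrm{At}(T)$ is the set of attributes labeling columns; $N(T)$ is the number of rows. For nonempty $T$ and a word $\alpha=(f_{i_1},\delta_1)\cdots(f_{i_m},\delta_m)$ with $f_{i_j}\in\mathrm{At}(T)$, $\delta_j\in E_2$, $T\alpha$ is the subtable of $T$ consisting of the rows having value $\delta_j$ in the column $f_{i_j}$ for all $j$; $T\lambda=T$ for the empty word $\lambda$. Operations: for $D\subseteq\mathrm{At}(T)$, $I(D,T)$ is obtained from $T$ by deleting the columns labeled with attributes from $D$ and, in each group of rows coinciding on the remaining columns, keeping only the first row; $I(\mathrm{At}(T),T)=\Lambda$. For $\nu:E_2^{|\mathrm{At}(T)|}\to\mathcal P(\omega)$,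 $J(\nu,T)$ is obtained by replacing the decision set of each row $\bar\delta$ by $\nu(\bar\delta)$. $[T]=\{J(\nu,I(D,T)):D\subseteq\mathrm{At}(T),\ \nu:E_2^{|\mathrm{At}(T)\setminus D|}\to\mathcal P(\omega)\}$; for nonempty $A\subseteq\mathcal M_2^\infty$, $[A]=\bigcup_{T\in A}[T]$. $A$ is a closed class if $[A]=A$; nontrivial if it contains a nonempty table. Decision trees: a $2$-decision tree is a finite directed rooted tree with at least two nodes in which the root and the edges leaving the root are unlabeled, each terminal node is labeled with a decision from $\omega$, and each other node is labeled with an attribute from $P$, each edge leaving such a node being labeled with a number from $E_2$. $\mathrm{At}(\Gamma)$ is the set of attributes labeling nodes of $\Gamma$. For a complete path $\tau=v_1,d_1,\dots,v_m,d_m,v_{m+1}$ (from the root to a terminal node), $\pi(\tau)=\lambda$ if $m=1$, and otherwise $\pi(\tau)=(f_{i_2},\delta_2)\cdots(f_{i_m},\delta_m)$ where $v_j$ is labeled $f_{i_j}$ and $d_j$ is labeled $\delta_j$; $T(\tau)=T\pi(\tau)$. For $T\ne\Lambda$, a nondeterministic decision tree for $T$ is a $2$-decision tree $\Gamma$ with $\mathrm{At}(\Gamma)\subseteq\mathrm{At}(T)$ such that every row of $T$ belongs to $T(\tau)$ for some complete path $\tau$, and for every complete path $\tau$ either $T(\tau)=\Lambda$ or the decision at the terminal node of $\tau$ belongs to $\Pi(T(\tau))$. A deterministic decision tree for $T$ is a nondeterministic decision tree for $T$ in which, additionally, exactly one edge leaves the root and the edges leaving any node that is neither the root nor terminal are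 labeled with pairwise different numbers. Complexity measures: a partially bounded complexity measure is a function $\psi:P^*\to\omega$ on finite words over $P$ such that for all words $\alpha_1,\alpha_2$: $\psi(\alpha_1)=0$ iff $\alpha_1=\lambda$; $\psi(\alpha_1)$ is invariant under permutation of letters; $\psi(\alpha_1)\le\psi(\alpha_1\alpha_2)$; $\psi(\alpha_1\alpha_2)\le\psi(\alpha_1)+\psi(\alpha_2)$. It is bounded if in addition $\psi(\alpha)\ge|\alpha|$ for all $\alpha$. $\psi$ is extended to words $(f_{i_1},\delta_1)\cdots(f_{i_m},\delta_m)$ by $\psi(f_{i_1}\cdots f_{i_m})$ ($\psi(\lambda)=0$). For a $2$-decision tree $\Gamma$, $\psi(\Gamma)=\max_\tau\psi(\pi(\tau))$ over complete paths. For $T\ne\Lambda$, $\psi^d(T)$ (resp. $\psi^a(T)$) is the minimum of $\psi(\Gamma)$ over deterministic (resp. nondeterministic) decision trees $\Gamma$ for $T$; $\psi^d(\Lambda)=\psi^a(\Lambda)=0$. Parameters: $m_\psi(T)=\max\{\psi(f_i):f_i\in\mathrm{At}(T)\}$, $m_\psi(\Lambda)=0$. A table $Q\in\mathcal M_2^\infty$ is complete if $N(Q)=2^{|\mathrm{At}(Q)|}$; $Z(T)$ is the maximum number of columns of a complete table in $[T]$ if such tables exist, and $0$ otherwise; $Z(\Lambda)=0$. For $n\in\omega$: $A_\psi(n)=\{T\in A:m_\psi(T)\le n\}$; $Z_{\psi,A}(n)$ is undefined if $\{Z(T):T\in A_\psi(n)\}$ is infinite, else its maximum; $\mathcal H^\infty_{\psi,A}(n)$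 is undefined if $\{\psi^d(T):T\in A,\psi^a(T)\le n\}$ is infinite, else its maximum. *)

(* Defs.v *)
From mathcomp Require Import all_boot.
From mathcomp Require Import finmap.
Set Implicit Arguments. Unset Strict Implicit. Unset Printing Implicit Defensive.
Local Open Scope fset_scope.

(* Attribute f_i is represented by its index i : nat; E_2 = bool;
   a decision set (element of P(omega)) is a nonempty {fset nat}. *)

Record table := Table {
  cols : seq nat;
  rows : seq (seq bool * {fset nat})
}.

Definition Lambda : table := Table [::] [::].

(* membership in M_2^infty *)
Definition wf_table (T : table) : Prop :=
  T = Lambda \/
  [/\ cols T != [::], uniq (cols T), rows T != [::] &
      [/\ all (fun r => size r.1 == size (cols T)) (rows T),
           uniq (map fst (rows T)) &
           all (fun r => r.2 != fset0) (rows T)]].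

Definition N_rows (T : table) : nat := size (rows T).

Definition row_val (T : table) (r : seq bool) (f : nat) : bool :=
  nth false r (index f (cols T)).

Definition row_sat (T : table) (alpha : seq (nat * bool)) (r : seq bool) : bool :=
  all (fun p => row_val T r p.1 == p.2) alpha.

Definition subtable (T : table) (alpha : seq (nat * bool)) : table :=
  let rs := [seq r <- rows T | row_sat T alpha r.1] in
  if rs is [::] then Lambda else Table (cols T) rs.

Definition dedup_first (s : seq (seq bool * {fset nat})) :=
  foldl (fun acc x => if x.1 \in map fst acc then acc else rcons acc x) [::] s.

Definition I_op (D : seq nat) (T : table) : table :=
  let keep := [seq f <- cols T | f \notin D] in
  if keep is [::] then Lambda else
  Table keep (dedup_first [seq ([seq row_val T r.1 f | f <- keep], r.2) | r <- rows T]).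

Definition J_op (nu : seq bool -> {fset nat}) (T : table) : table :=
  Table (cols T) [seq (r.1, nu r.1) | r <- rows T].

Definition in_cl (T' T : table) : Prop :=
  exists (D : seq nat) (nu : seq bool -> {fset nat}),
    {subset D <= cols T} /\ (forall x, nu x != fset0) /\ T' = J_op nu (I_op D T).

Definition closed_class (A : table -> Prop) : Prop :=
  (forall T, A T -> wf_table T) /\ (exists T, A T) /\
  (forall T, A T <-> exists T0, A T0 /\ in_cl T T0).

Definition nontrivial (A : table -> Prop) : Prop :=
  exists T, A T /\ T <> Lambda.

(* non-root nodes: terminal (decision) or attribute-labelled with labelled edges *)
Inductive dnode :=
  | Leaf : nat -> dnode
  | Node : nat -> dforest -> dnode
with dforest :=
  | FNil : dforest
  | FCons : bool -> dnode -> dforest -> dforest.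

(* a 2-decision tree: the (unlabelled) root with the list of its children *)
Definition dtree := seq dnode.

Fixpoint forest_labels (f : dforest) : seq bool :=
  match f with
  | FNil => [::]
  | FCons b _ f' => b :: forest_labels f'
  end.

Fixpoint node_ok (det : bool) (v : dnode) : bool :=
  match v with
  | Leaf _ => true
  | Node _ f => (if f is FNil then false else true) && forest_ok det f
                && (det ==> uniq (forest_labels f))
  end
with forest_ok (det : bool) (f : dforest) : bool :=
  match f with
  | FNil => true
  | FCons _ v f' => node_ok det v && forest_ok det f'
  end.

Fixpoint node_attrs (v : dnode) : seq nat :=
  match v with
  | Leaf _ => [::]
  | Node a f => a :: forest_attrs f
  end
with forest_attrs (f : dforest) : seq nat :=
  match f with
  | FNil => [::]
  | FCons _ v f' => node_attrs v ++ forest_attrs f'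
  end.

Fixpoint node_paths (v : dnode) : seq (seq (nat * bool) * nat) :=
  match v with
  | Leaf d => [:: ([::], d)]
  | Node a f => forest_paths a f
  end
with forest_paths (a : nat) (f : dforest) : seq (seq (nat * bool) * nat) :=
  match f with
  | FNil => [::]
  | FCons b v f' =>
      [seq ((a, b) :: p.1, p.2) | p <- node_paths v] ++ forest_paths a f'
  end.

Definition tree_paths (G : dtree) := flatten (map node_paths G).
Definition tree_attrs (G : dtree) := flatten (map node_attrs G).

Definition nondet_tree (T : table) (G : dtree) : Prop :=
  [/\ G <> [::], all (node_ok false) G,
      {subset tree_attrs G <= cols T},
      (forall r, r \in rows T ->
         exists2 p, p \in tree_paths G & r \in rows (subtable T p.1)) &
      (forall p, p \in tree_paths G ->
         subtable T p.1 = Lambda \/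
         forall r, r \in rows (subtable T p.1) -> p.2 \in r.2)].

Definition det_tree (T : table) (G : dtree) : Prop :=
  nondet_tree T G /\ size G = 1 /\ all (node_ok true) G.

Definition partially_bounded_measure (psi : seq nat -> nat) : Prop :=
  [/\ forall a, (psi a == 0) = (a == [::]),
      forall a b, perm_eq a b -> psi a = psi b,
      forall a b, psi a <= psi (a ++ b) &
      forall a b, psi (a ++ b) <= psi a + psi b].

Definition bounded_measure (psi : seq nat -> nat) : Prop :=
  partially_bounded_measure psi /\ forall a, size a <= psi a.

Definition tree_cost (psi : seq nat -> nat) (G : dtree) : nat :=
  \max_(p <- tree_paths G) psi (map fst p.1).

Definition psi_d_val (psi : seq nat -> nat) (T : table) (k : nat) : Prop :=
  if rows T is [::] then k = 0 else
  (exists G, det_tree T G /\ tree_cost psi G = k) /\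
  (forall G, det_tree T G -> k <= tree_cost psi G).

Definition psi_a_val (psi : seq nat -> nat) (T : table) (k : nat) : Prop :=
  if rows T is [::] then k = 0 else
  (exists G, nondet_tree T G /\ tree_cost psi G = k) /\
  (forall G, nondet_tree T G -> k <= tree_cost psi G).

Definition m_psi (psi : seq nat -> nat) (T : table) : nat :=
  \max_(f <- cols T) psi [:: f].

Definition complete (Q : table) : Prop := N_rows Q = 2 ^ size (cols Q).

Definition Z_val (T : table) (k : nat) : Prop :=
  (exists Q, [/\ in_cl Q T, complete Q, size (cols Q) = k &
     forall Q', in_cl Q' T -> complete Q' -> size (cols Q') <= k])
  \/ (k = 0 /\ forall Q, in_cl Q T -> ~ complete Q).

Definition infinite_set (S : nat -> Prop) : Prop :=
  ~ exists s : seq nat, forall k, S k -> k \in s.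

Definition Z_undefined (psi : seq nat -> nat) (A : table -> Prop) (n : nat) :=
  infinite_set (fun k => exists T, [/\ A T, m_psi psi T <= n & Z_val T k]).

Definition H_undefined (psi : seq nat -> nat) (A : table -> Prop) (n : nat) :=
  infinite_set (fun k => exists T, [/\ A T,
     (exists a, psi_a_val psi T a /\ a <= n) & psi_d_val psi T k]).

(* Main.v *)
Require Import Defs.
From mathcomp Require Import all_boot.
From mathcomp Require Import finmap.
From mathcomp Require Import zify.
From Stdlib Require Import Classical.
Set Implicit Arguments. Unset Strict Implicit. Unset Printing Implicit Defensive.
Local Open Scope fset_scope.


Definition good (x : seq bool) (i : nat) : bool :=
  if i is t.+1 then (t.+1 < size x) && (nth false x t != nth false x t.+1)
  else nth false x 0 == nth false x (size x).-1.

Definition goodset x := [seq i <- iota 0 (size x).+1 | good x i].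
Definition nu (x : seq bool) : {fset nat} := seq_fset tt (goodset x).

Lemma in_nu x i : (i \in nu x) = good x i.
Proof.
rewrite seq_fsetE mem_filter mem_iota /=; case: i => [|t] /=; first by rewrite andbT.
apply/andP/idP => [[]//|H]; split=>//; case/andP: H => H _; lia.
Qed.

Lemma trans_exists x m : m < size x -> nth false x 0 != nth false x m ->
  exists2 t, t < m & nth false x t != nth false x t.+1.
Proof.
elim: m => [|m IH] Hm; first by rewrite eqxx.
case: (eqVneq (nth false x 0) (nth false x m)) => [E|N] H.
  by exists m => //; rewrite -E.
by case: (IH (ltnW Hm) N) => t Ht Ht2; exists t => //; lia.
Qed.

Lemma good_ex x : exists i, good x i.
Proof.
case: (boolP (good x 0)) => [H|H]; first by exists 0.
case: x H => [|b x] //= H.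
have := @trans_exists (b :: x) (size x) (ltnSn _).
rewrite /= in H. case/(_ H) => t Ht Ht2. exists t.+1 => /=.
by rewrite Ht2 andbT; lia.
Qed.

Lemma nu_ne x : nu x != fset0.
Proof.
case: (good_ex x) => i Hi; apply/negP => /eqP E.
by have := in_nu x i; rewrite E Hi inE.
Qed.

Lemma goodset_ne x : goodset x != [::].
Proof.
case: (good_ex x) => i Hi; apply/negP => /eqP E.
have : i \in goodset x by rewrite -(seq_fsetE tt) in_nu.
by rewrite E.
Qed.

Definition dec x := nth 0 (goodset x) 0.
Lemma dec_nu x : dec x \in nu x.
Proof. rewrite seq_fsetE /dec mem_nth // lt0n size_eq0; exact: goodset_ne. Qed.

Fixpoint allseq k : seq (seq bool) :=
  if k is k'.+1 then map (cons false) (allseq k') ++ map (cons true) (allseq k') else [:: [::]].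

Lemma size_allseq k : size (allseq k) = 2 ^ k.
Proof. by elim: k => //= k IH; rewrite size_cat !size_map IH expnS mul2n addnn. Qed.

Lemma mem_allseq k x : size x = k -> x \in allseq k.
Proof.
elim: k x => [|k IH] [|b x] //= [Hx].
by rewrite mem_cat; case: b; apply/orP; [right|left]; apply/mapP; exists x => //; apply: IH.
Qed.

Lemma ex_min (S : nat -> Prop) m : S m -> exists k, S k /\ forall k', S k' -> k <= k'.
Proof.
elim: m {-2}m (leqnn m) => [|N IH] m Hm Sm.
  by exists m; split=> // k' _; lia.
case: (classic (exists m', m' < m /\ S m')) => [[m' [H1 H2]]|H].
  by apply: (IH m') => //; lia.
exists m; split => // k' Sk'; case: (leqP m k') => // Hlt.
by exfalso; apply: H; exists k'.
Qed.


Lemma mem_subtable T p r :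
  (r \in rows (subtable T p)) = (r \in rows T) && row_sat T p r.1.
Proof.
rewrite /subtable andbC -(mem_filter (fun r : seq bool * {fset nat} => row_sat T p r.1)).
by case E: [seq _ <- _ | _] => [|y ys] //=; rewrite in_nil.
Qed.

Definition ddstep (acc : seq (seq bool * {fset nat})) (x : seq bool * {fset nat}) :=
  if x.1 \in map fst acc then acc else rcons acc x.

Lemma foldl_dd acc s :
  (forall y, y \in foldl ddstep acc s -> y \in acc ++ s) /\
  (map fst (foldl ddstep acc s) =i map fst (acc ++ s)).
Proof.
elim: s acc => [|x s IH] acc /=; first by rewrite cats0.
have [H1 H2] := IH (ddstep acc x); split.
  move=> y /H1; rewrite /ddstep; case: ifP => _; rewrite !mem_cat ?mem_rcons ?inE.
    by case/orP=> ->; rewrite ?orbT.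
  by rewrite -!orbA; case/or3P=> ->; rewrite ?orbT.
move=> k; rewrite H2 /ddstep; case: ifP => Hx; rewrite !map_cat !mem_cat /= ?inE.
  by case: (eqVneq k x.1) => [->|]; rewrite ?Hx ?orbT.
by rewrite map_rcons mem_rcons inE orbA (orbC (k == _)).
Qed.

Lemma dedup_sub s y : y \in dedup_first s -> y \in s.
Proof. by case: (foldl_dd [::] s) => H _; move/H. Qed.

Lemma dedup_keys s : map fst (dedup_first s) =i map fst s.
Proof. by case: (foldl_dd [::] s). Qed.

Definition Tp Q := J_op nu (I_op [::] Q).

Lemma Tp_cols Q : cols Q != [::] -> cols (Tp Q) = cols Q.
Proof.
move=> H; rewrite /Tp /I_op (eq_filter (a2:=predT)) // filter_predT.
by case: (cols Q) H.
Qed.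

Lemma Tp_rows_eq Q : cols Q != [::] ->
  rows (Tp Q) = [seq (r.1, nu r.1) | r <- dedup_first
     [seq ([seq row_val Q r.1 f | f <- cols Q], r.2) | r <- rows Q]].
Proof.
move=> H; rewrite /Tp /I_op (eq_filter (a2:=predT)) // filter_predT.
by case: (cols Q) H.
Qed.

Lemma map_row_val Q r : uniq (cols Q) -> size r = size (cols Q) ->
  [seq row_val Q r f | f <- cols Q] = r.
Proof.
move=> U S; apply: (@eq_from_nth _ false); first by rewrite size_map.
move=> i; rewrite size_map => Hi.
by rewrite (nth_map 0) // /row_val index_uniq.
Qed.

Lemma Tp_rows Q r : cols Q != [::] -> uniq (cols Q) ->
  all (fun r => size r.1 == size (cols Q)) (rows Q) ->
  r \in rows (Tp Q) -> size r.1 = size (cols Q) /\ r.2 = nu r.1.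
Proof.
move=> H U /allP S; rewrite Tp_rows_eq // => /mapP [y /dedup_sub /mapP [z Hz ->] ->].
by split=> //=; rewrite size_map.
Qed.

Lemma Tp_all Q x : cols Q != [::] -> uniq (cols Q) ->
  all (fun r => size r.1 == size (cols Q)) (rows Q) ->
  uniq (map fst (rows Q)) -> size (rows Q) = 2 ^ size (cols Q) ->
  size x = size (cols Q) -> (x, nu x) \in rows (Tp Q).
Proof.
move=> H U /allP S Uq N Sx.
have Hx : x \in map fst (rows Q).
  have sub : {subset map fst (rows Q) <= allseq (size (cols Q))}.
    by move=> y /mapP [z Hz ->]; apply: mem_allseq; apply/eqP/S.
  have sz : size (allseq (size (cols Q))) <= size (map fst (rows Q)).
    by rewrite size_allseq size_map N.
  have [_ E] := uniq_min_size Uq sub sz.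
  by rewrite E mem_allseq.
have : x \in map fst (dedup_first [seq ([seq row_val Q r.1 f | f <- cols Q], r.2) | r <- rows Q]).
  rewrite dedup_keys -map_comp.
  suff -> : [seq (fst \o (fun r => ([seq row_val Q r.1 f | f <- cols Q], r.2))) i | i <- rows Q] = map fst (rows Q) by [].
  by apply/eq_in_map => z /S /eqP Sz /=; rewrite map_row_val.
case/mapP => y Hy Ey; rewrite Tp_rows_eq //; apply/mapP; exists y => //.
by rewrite Ey.
Qed.


Fixpoint fchild (f : dforest) (b : bool) : option dnode :=
  match f with FNil => None
  | FCons b' v f' => if b' == b then Some v else fchild f' b end.

Lemma fchild_lab f b w : fchild f b = Some w -> b \in forest_labels f.
Proof.
elim: f => //= b' v f' IH; case: eqVneq => [->|_]; first by rewrite inE eqxx.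
by move/IH; rewrite inE orbC => ->.
Qed.

Lemma fchild_paths a f b w q : fchild f b = Some w -> q \in node_paths w ->
  ((a, b) :: q.1, q.2) \in forest_paths a f.
Proof.
elim: f => //= b' v f' IH; rewrite mem_cat; case: eqVneq => [->|_].
  by case=> <- Hq; apply/orP; left; apply/mapP; exists q.
by move=> H Hq; rewrite (IH H Hq) orbT.
Qed.

Lemma fchild_ok det f b w : fchild f b = Some w -> forest_ok det f -> node_ok det w.
Proof.
elim: f => //= b' v f' IH; case: eqVneq => _; first by case=> <- /andP[].
by move=> H /andP[_]; apply: IH.
Qed.

Lemma forest_paths_inv a f p : uniq (forest_labels f) -> p \in forest_paths a f ->
  exists b q w, [/\ fchild f b = Some w, q \in node_paths w & p = ((a, b) :: q.1, q.2)].
Proof.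
elim: f => //= b' v f' IH /andP[Nb U]; rewrite mem_cat; case/orP.
  by case/mapP => q Hq ->; exists b', q, v; rewrite eqxx.
case/(IH U) => b [q [w [H1 H2 H3]]]; exists b, q, w; split=> //.
case: eqVneq => // E; exfalso; move: Nb; rewrite E (fchild_lab H1) //.
Qed.

Definition inF k l r (x : seq bool) : Prop :=
  [/\ size x = k, (forall i, i <= l -> nth false x i = false) &
      (forall i, r <= i < k -> nth false x i = true)].

Definition Good T k v l r : Prop :=
  (forall x, inF k l r x -> exists2 p, p \in node_paths v & row_sat T p.1 x) /\
  (forall p x, p \in node_paths v -> inF k l r x -> row_sat T p.1 x -> p.2 \in nu x).

Definition tv k t := mkseq (fun i => t < i) k.

Lemma tv_inF k l r t : l <= t < r -> inF k l r (tv k t).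
Proof.
move=> /andP[H1 H2]; split; first by rewrite size_mkseq.
  move=> i Hi; case: (ltnP i k) => Hk; first by rewrite nth_mkseq //; apply/negbTE; rewrite -leqNgt; lia.
  by rewrite nth_default // size_mkseq.
by move=> i /andP[Hi Hk]; rewrite nth_mkseq //; lia.
Qed.

Lemma tv_good k t d : t.+1 < k -> good (tv k t) d -> d = t.+1.
Proof.
move=> Ht; rewrite /good size_mkseq; case: d => [|s].
  by rewrite !nth_mkseq //; lia.
case/andP => Hs; rewrite !nth_mkseq //; try lia.
Qed.

Definition adv k l r j : bool * nat * nat :=
  if j <= l then (false, l, r) else if j < r then
    (if r - j <= j - l then (true, l, j) else (false, j, r)) else (j < k, l, r).

Lemma adv_spec k l r j : l < r < k ->
  let: (b, l', r') := adv k l r j in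
  [/\ l' < r' < k, r - l <= 2 * (r' - l') &
   forall x, inF k l' r' x -> inF k l r x /\ nth false x j = b].
Proof.
move=> /andP[Hlr Hrk]; rewrite /adv.
case: (leqP j l) => H1.
  split=> //; [apply/andP; split=>//|lia|]. by move=> x [S X1 X2]; split=> //; apply: X1.
case: (ltnP j r) => H2.
  case: (leqP (r - j) (j - l)) => H3.
    split; [apply/andP; split; lia|lia|].
    move=> x [S X1 X2]; split; last by apply: X2; lia.
    split=> // i Hi; apply: X2; lia.
  split; [apply/andP; split; lia|lia|].
  move=> x [S X1 X2]; split; last by apply: X1.
  split=> // i Hi; apply: X1; lia.
split; [apply/andP; split=>//|lia|].
move=> x [S X1 X2]; split=> //; case: (ltnP j k) => Hj; first by apply: X2; lia.
by rewrite nth_default // S.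
Qed.

Lemma adversary T k h v l r : node_ok true v ->
  (forall p, p \in node_paths v -> size p.1 <= h) ->
  Good T k v l r -> l < r < k -> r - l <= 2 ^ h.
Proof.
elim: h v l r => [|h IH] v l r.
- case: v => [d|a f] Hok Hs [Cov Dec] /andP[Hlr Hrk].
  + case: (leqP (r - l) 1) => Hg; first by [] || lia.
    have Hd1 : d \in nu (tv k l).
      by apply: (Dec ([::], d)); rewrite ?inE //; apply: tv_inF; lia.
    have Hd2 : d \in nu (tv k l.+1).
      by apply: (Dec ([::], d)); rewrite ?inE //; apply: tv_inF; lia.
    rewrite in_nu in Hd1; rewrite in_nu in Hd2.
    have E1 := @tv_good k l d ltac:(lia) Hd1.
    have E2 := @tv_good k l.+1 d ltac:(lia) Hd2. lia.
  + case: (Cov (tv k l)); first by apply: tv_inF; lia.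
    move=> p Hp _; have := Hs p Hp; move: Hp => /=.
    case/andP: Hok => /andP [_ _] /= U.
    by case/(forest_paths_inv U) => b [q [w [_ _ ->]]].
- case: v => [d|a f] Hok Hs [Cov Dec] /andP[Hlr Hrk].
  + case: (leqP (r - l) 1) => Hg. rewrite expnS. have : 0 < 2 ^ h by rewrite expn_gt0. lia.
    have Hd1 : d \in nu (tv k l).
      by apply: (Dec ([::], d)); rewrite ?inE //; apply: tv_inF; lia.
    have Hd2 : d \in nu (tv k l.+1).
      by apply: (Dec ([::], d)); rewrite ?inE //; apply: tv_inF; lia.
    rewrite in_nu in Hd1; rewrite in_nu in Hd2.
    have E1 := @tv_good k l d ltac:(lia) Hd1.
    have E2 := @tv_good k l.+1 d ltac:(lia) Hd2. lia.
  + case/andP: Hok => /andP [_ Fok] /= U.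
    set j := index a (cols T).
    have := @adv_spec k l r j ltac:(lia).
    case E: (adv k l r j) => [[b l'] r'] [/andP[Hl' Hr'] Hgap Hsub].
    have Hx0 : inF k l' r' (tv k l') by apply: tv_inF; lia.
    have [Hx0a Hx0b] := Hsub _ Hx0.
    case: (Cov _ Hx0a) => p0 /= Hp0 Hs0.
    case: (forest_paths_inv U Hp0) => b0 [q0 [w [Hw Hq0 Ep0]]].
    move: Hs0; rewrite Ep0 /= {1}/row_val -/j Hx0b => /andP[/eqP Eb _].
    subst b0.
    have Gw : Good T k w l' r'.
      split.
        move=> x Hx; have [Hxa Hxb] := Hsub _ Hx.
        case: (Cov _ Hxa) => p1 /= Hp1 Hs1.
        case: (forest_paths_inv U Hp1) => b1 [q1 [w1 [Hw1 Hq1 Ep1]]].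
        move: Hs1; rewrite Ep1 /= {1}/row_val -/j Hxb => /andP[/eqP Eb Hs1].
        subst b1; move: Hw1; rewrite Hw => -[Ew]; subst w1; by exists q1.
      move=> q x Hq Hx Hsq; have [Hxa Hxb] := Hsub _ Hx.
      apply: (Dec ((a, b) :: q.1, q.2)) => //=; first exact: fchild_paths Hw Hq.
      by rewrite {1}/row_val -/j Hxb eqxx Hsq.
    have Hsw : forall q, q \in node_paths w -> size q.1 <= h.
      by move=> q Hq; have := Hs _ (fchild_paths a Hw Hq).
    have := IH w l' r' (fchild_ok Hw Fok) Hsw Gw ltac:(lia).
    rewrite expnS; lia.
Qed.


Definition tabOK (T : table) k :=
  [/\ uniq (cols T), size (cols T) = k,
      forall r, r \in rows T -> size r.1 = k /\ r.2 = nu r.1 &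
      forall x, size x = k -> (x, nu x) \in rows T].

Lemma rv_nth T x i : uniq (cols T) -> i < size (cols T) ->
  row_val T x (nth 0 (cols T) i) = nth false x i.
Proof. by move=> U Hi; rewrite /row_val index_uniq. Qed.

Lemma det_lower psi T k G : tabOK T k -> 1 < k -> bounded_measure psi ->
  det_tree T G -> k.-1 <= 2 ^ (tree_cost psi G).
Proof.
move=> [U Sk HR HA] Hk [_ Hpsi] [[_ _ _ Cov Dec] [SG OK]].
case: G SG Cov Dec OK => [|v [|]] //= _ Cov Dec /andP[Hv _].
have Sz : forall p, p \in node_paths v -> size p.1 <= tree_cost psi [:: v].
  move=> p Hp; rewrite -(size_map fst); apply: leq_trans (Hpsi _) _.
  rewrite /tree_cost; apply: (@leq_bigmax_seq _ _ xpredT (fun p => psi (map fst p.1)) p) => //.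
  by rewrite /tree_paths /= cats0.
rewrite /tree_paths /= cats0 in Cov Dec.
have G0 : Good T k v 0 k.-1.
  split.
    move=> x [Sx _ _]; case: (Cov _ (HA x Sx)) => p Hp.
    by rewrite mem_subtable => /andP[_ Hs]; exists p.
  move=> p x Hp [Sx _ _] Hs.
  have Hr : (x, nu x) \in rows (subtable T p.1) by rewrite mem_subtable HA.
  case: (Dec p Hp) => [E|H]; last by apply: (H _ Hr).
  by move: Hr; rewrite E.
have := adversary Hv Sz G0 ltac:(lia). by rewrite subn0.
Qed.

Fixpoint full (s : seq nat) (acc : seq bool) : dnode :=
  match s with
  | [::] => Leaf (dec acc)
  | a :: s' => Node a (FCons false (full s' (rcons acc false))
                       (FCons true (full s' (rcons acc true)) FNil))
  end.

Lemma full_paths_inv s acc p : p \in node_paths (full s acc) ->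
  exists2 bits, size bits = size s & p = (zip s bits, dec (acc ++ bits)).
Proof.
elim: s acc p => [|a s IH] acc p /=.
  by rewrite inE => /eqP ->; exists [::]; rewrite ?cats0.
rewrite !mem_cat in_nil orbF; case/orP => /mapP [q /IH [bits Hb ->] ->].
  by exists (false :: bits); rewrite /= ?Hb // cat_rcons.
by exists (true :: bits); rewrite /= ?Hb // cat_rcons.
Qed.

Lemma full_paths s acc bits : size bits = size s ->
  (zip s bits, dec (acc ++ bits)) \in node_paths (full s acc).
Proof.
elim: s acc bits => [|a s IH] acc [|b bits] //= => [_|[Hb]].
  by rewrite cats0 inE.
rewrite !mem_cat; case: b; apply/orP; [right|left]; rewrite ?in_nil ?orbF.
  by apply/mapP; exists (zip s bits, dec (rcons acc true ++ bits)); rewrite ?IH ?cat_rcons.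
by apply/mapP; exists (zip s bits, dec (rcons acc false ++ bits)); rewrite ?IH ?cat_rcons.
Qed.

Lemma full_ok s acc : node_ok true (full s acc).
Proof. by elim: s acc => //= a s IH acc; rewrite !IH. Qed.

Lemma full_attrs s acc : {subset node_attrs (full s acc) <= s}.
Proof.
elim: s acc => //= a s IH acc y; rewrite [y \in a :: _]inE !mem_cat in_nil orbF.
by case/or3P => [/eqP ->|/IH H|/IH H]; rewrite inE ?eqxx ?H ?orbT.
Qed.

Lemma full_ok_false s acc : node_ok false (full s acc).
Proof. by elim: s acc => //= a s IH acc; rewrite !IH. Qed.

Lemma sat_zip T x bits : uniq (cols T) -> size x = size (cols T) -> size bits = size (cols T) ->
  row_sat T (zip (cols T) bits) x = (x == bits).
Proof.
move=> U Sx Sb; apply/idP/eqP => [/allP H|->].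
  apply: (@eq_from_nth _ false); first by rewrite Sx Sb.
  move=> i Hi; rewrite Sx in Hi.
  have : (nth 0 (cols T) i, nth false bits i) \in zip (cols T) bits.
    by rewrite -nth_zip ?Sb //; apply: mem_nth; rewrite size_zip Sb minnn.
  by move/H => /= /eqP; rewrite rv_nth.
apply/(all_nthP (0, false)) => i; rewrite size_zip Sb minnn => Hi.
by rewrite nth_zip ?Sb //= rv_nth.
Qed.

Lemma full_det T k : tabOK T k -> det_tree T [:: full (cols T) [::]].
Proof.
move=> [U Sk HR HA]; split; last by rewrite /= full_ok.
split=> //=; first by rewrite (@full_ok_false).
- by move=> y; rewrite /tree_attrs /= cats0; apply: full_attrs.
- move=> r Hr; have [Sr _] := HR r Hr.
  exists (zip (cols T) r.1, dec ([::] ++ r.1)).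
    by rewrite /tree_paths /= ?cats0; apply: (full_paths [::]); rewrite Sr.
  by rewrite mem_subtable Hr sat_zip ?Sr // eqxx.
- move=> p; rewrite /tree_paths /= cats0 => /full_paths_inv [bits Hb ->].
  right=> r; rewrite mem_subtable => /andP[Hr]; have [Sr ->] := HR r Hr.
  by rewrite sat_zip ?Sr // => /eqP ->; apply: dec_nu.
Qed.


Definition ndnode (ca : nat -> nat) t :=
  Node (ca t) (FCons false (Node (ca t.+1) (FCons true (Leaf t.+1) FNil))
              (FCons true (Node (ca t.+1) (FCons false (Leaf t.+1) FNil)) FNil)).
Definition endnode (ca : nat -> nat) k :=
  Node (ca 0) (FCons false (Node (ca k.-1) (FCons false (Leaf 0) FNil))
              (FCons true (Node (ca k.-1) (FCons true (Leaf 0) FNil)) FNil)).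
Definition ndtree ca k := endnode ca k :: map (ndnode ca) (iota 0 k.-1).

Lemma ndtree_paths ca k p : p \in tree_paths (ndtree ca k) ->
  (exists b, p = ([:: (ca 0, b); (ca k.-1, b)], 0)) \/
  (exists t b, t < k.-1 /\ p = ([:: (ca t, b); (ca t.+1, ~~ b)], t.+1)).
Proof.
rewrite /tree_paths /ndtree map_cons -map_comp => /flattenP [vs]; rewrite inE => /orP[/eqP ->|/mapP [t Ht ->]] /=;
  rewrite !inE => /orP [/eqP->|/eqP->]; eauto.
- by right; exists t, false; rewrite mem_iota in Ht; split=> //; lia.
- by right; exists t, true; rewrite mem_iota in Ht; split=> //; lia.
Qed.

Lemma ndtree_attrs ca k y : 0 < k -> y \in tree_attrs (ndtree ca k) ->
  exists2 i, i < k & y = ca i.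
Proof.
move=> Hk; rewrite /tree_attrs /ndtree map_cons -map_comp => /flattenP [vs]; rewrite inE => /orP[/eqP ->|/mapP [t Ht ->]] /=;
  rewrite !inE ?in_nil ?orbF.
  by case/or3P => /eqP ->; [exists 0|exists k.-1|exists k.-1] => //; lia.
rewrite mem_iota in Ht.
by case/or3P => /eqP ->; [exists t|exists t.+1|exists t.+1] => //; lia.
Qed.

Lemma nd_ok T k : tabOK T k -> 0 < k ->
  nondet_tree T (ndtree (fun i => nth 0 (cols T) i) k).
Proof.
move=> [U Sk HR HA] Hk; split=> //.
- rewrite /ndtree /= all_map; apply/allP => t _ //.
- move=> y /(@ndtree_attrs _ k y Hk) [i Hi ->]; by rewrite mem_nth // Sk.
- move=> r Hr; have [Sr _] := HR r Hr; set x := r.1 in Sr *.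
  case: (good_ex x) => [[|t]] /=.
  + move=> /eqP E; exists ([:: (nth 0 (cols T) 0, nth false x 0);
                             (nth 0 (cols T) k.-1, nth false x 0)], 0).
      rewrite /tree_paths /=.
      by case: (nth false x 0); rewrite !inE eqxx ?orbT.
    rewrite mem_subtable Hr /row_sat /= !rv_nth ?Sk //; try lia.
    by rewrite Sr in E; rewrite -E !eqxx.
  + case/andP => Ht Hne; have Htk : t.+1 < k by rewrite -Sr.
    exists ([:: (nth 0 (cols T) t, nth false x t);
              (nth 0 (cols T) t.+1, ~~ nth false x t)], t.+1).
      rewrite /tree_paths /= !inE; do 2 (apply/orP; right).
      rewrite -map_comp; apply/flattenP; exists (node_paths (ndnode (fun i => nth 0 (cols T) i) t)).
        by apply/mapP; exists t => //; rewrite mem_iota; move: Ht; rewrite Sr; lia.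
      by case: (nth false x t); rewrite /= !inE eqxx ?orbT.
    rewrite mem_subtable Hr /row_sat /= !rv_nth ?Sk //; try lia.
    by move: Hne; case: (nth false x t); case: (nth false x t.+1).
- move=> p /ndtree_paths [[b ->]|[t [b [Ht ->]]]]; right => r;
    rewrite mem_subtable => /andP[Hr]; have [Sr ->] := HR r Hr;
    rewrite /row_sat /= !rv_nth ?Sk //; try lia; rewrite in_nu /=.
  + by rewrite Sr => /and3P [/eqP -> /eqP -> _].
  + rewrite Sr => /and3P [/eqP -> /eqP -> _]; apply/andP; split; first lia.
    by case: b.
Qed.

Lemma nd_cost psi T k n : tabOK T k -> 0 < k -> bounded_measure psi ->
  (forall a, a \in cols T -> psi [:: a] <= n) ->
  tree_cost psi (ndtree (fun i => nth 0 (cols T) i) k) <= n + n.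
Proof.
move=> [U Sk HR HA] Hk [[_ _ _ Hsub] _] Hn.
apply/bigmax_leqP_seq => p /ndtree_paths H _.
have H2 : forall i j, i < k -> j < k -> psi [:: nth 0 (cols T) i; nth 0 (cols T) j] <= n + n.
  move=> i j Hi Hj; apply: leq_trans (Hsub [:: _] [:: _]) _.
  by apply: leq_add; apply: Hn; rewrite mem_nth // Sk.
case: H => [[b ->]|[t [b [Ht ->]]]] /=; apply: H2; lia.
Qed.

Local Close Scope fset_scope.


Lemma cols_I D T : {subset cols (I_op D T) <= cols T}.
Proof.
rewrite /I_op; case E: [seq _ <- _ | _] => [|a l] //= y.
by rewrite -E mem_filter => /andP[].
Qed.

Unset Implicit Arguments.
Theorem lemma11 (A : table -> Prop) (psi : seq nat -> nat) :
  closed_class A -> nontrivial A -> bounded_measure psi ->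
  (exists n, Z_undefined psi A n) ->
  exists n, H_undefined psi A n.
Proof.
move=> [Hwf [_ Hcl]] _ Hpsi [n HZ]; exists (n + n)%N => -[s Hs].
set M := \max_(i <- s) i.
apply: HZ; exists (iota 0 (2 ^ M + 2)) => k [T [AT Hm HZv]].
rewrite mem_iota /=; case: (ltnP k (2 ^ M + 2)) => Hk; first by [].
exfalso.
case: HZv => [[Q [HQ Hcomp HQk _]]|[Hk0 _]]; last by move: Hk; rewrite Hk0; lia.
have AQ : A Q by apply/(Hcl Q); exists T.
have HQT : {subset cols Q <= cols T}.
  by case: HQ => D [nu0 [_ [_ ->]]]; apply: cols_I.
have Hn : forall a, a \in cols Q -> psi [:: a] <= n.
  move=> a /HQT Ha; apply: leq_trans Hm; rewrite /m_psi.
  exact: (@leq_bigmax_seq _ _ xpredT (fun f => psi [:: f]) a).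
have Hk0 : 0 < k by lia.
have Hc : cols Q != [::] by rewrite -size_eq0 HQk -lt0n.
have [EQ|[_ U _ [Sz Uq _]]] := Hwf Q AQ; first by move: Hc; rewrite EQ.
set T' := Tp Q.
have OK : tabOK T' k.
  split; rewrite ?Tp_cols //; rewrite -?HQk.
  - by move=> r; apply: Tp_rows.
  - by move=> x; apply: Tp_all.
have AT' : A T'.
  apply/(Hcl T'); exists Q; split=> //; exists [::], nu; split=> //; split=> //.
  exact: nu_ne.
have Hne : rows T' != [::].
  case: OK => _ _ _ HA; have := HA (nseq k false); rewrite size_nseq => /(_ erefl).
  by case: (rows T').
have [a [[Ga [HGa HGa']] Hamin]] := @ex_min
  (fun m => exists G, nondet_tree T' G /\ tree_cost psi G = m) _
  (ex_intro _ _ (conj (nd_ok OK Hk0) erefl)).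
have [kd [[Gd [HGd HGd']] Hdmin]] := @ex_min
  (fun m => exists G, det_tree T' G /\ tree_cost psi G = m) _
  (ex_intro _ _ (conj (full_det OK) erefl)).
have Hkd : kd \in s.
  apply: Hs; exists T'; split=> //.
    exists a; split.
      rewrite /psi_a_val; case E: (rows T') Hne => [|r0 rs] // _.
      by split; [exists Ga | move=> G HG; apply: Hamin; exists G].
    apply: leq_trans (Hamin _ (ex_intro _ _ (conj (nd_ok OK Hk0) erefl))) _.
    apply: nd_cost => //; rewrite Tp_cols //.
  rewrite /psi_d_val; case E: (rows T') Hne => [|r0 rs] // _.
  by split; [exists Gd | move=> G HG; apply: Hdmin; exists G].
have HkdM : kd <= M.
  exact: (@leq_bigmax_seq _ _ xpredT (fun i => i) kd).
have := det_lower OK ltac:(lia) Hpsi HGd; rewrite HGd' => H.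
have := @leq_pexp2l 2 _ _ (isT : 0 < 2) HkdM; lia.
Qed.
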